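(* Let $O_1$ be an optimal solution of $I_1$ (assumed to exist). Then the optimal cost of the instance $I_2$ is at most $2\,\mathrm{Cost}_{I_1}(O_1)$.
   Context: An instance of LBUBFL with uniform bounds consists of a finite client set $\mathcal C$, a finite facility set $\mathcal F$, a metric $c$ on $\mathcal C\cup\mathcal F$, opening costs $f_i\ge0$, and integers $1\le\mathcal L\le\mathcal U$; a feasible solution opens $\mathcal F'\subseteq\mathcal F$ and assigns clients by $\sigma:\mathcal C\to\mathcal F'$ with $\mathcal L\le|\sigma^{-1}(i)|\le\mathcal U$ for all $i\in\mathcal F'$, at cost $\sum_{i\in\mathcal F'}f_i+\sum_jc(j,\sigma(j))$. Given a nonempty $\mathcal F^t\subseteq\mathcal F$ and an assignment $\sigma^t:\mathcal C\to\mathcal F^t$, the instance $I_1$ is the LBUBFL instance with the same clients, facilities and bounds, in which client $j$ is relocated to the location of $\sigma^t(j)$ (cost of serving $j$ by $i$ is $c(\sigma^t(j),i)$), with opening costs $f^1_i=0$ for $i\in\mathcal F^t$ and $f^1_i=f_i$ otherwise. The instance $I_2$ is the lower-bounded facility location instance (no upper bound) with facility set $\mathcal F^t$, all opening costs $0$, the same relocated clients, and lower bound $\mathcal L$: a feasible solution opens some $\mathcal F''\subseteq\mathcal F^t$ and assigns each client to an opened facility so that every opened facility receives at least $\mathcal L$ clients; its cost is $\sum_jc(\sigma^t(j),\sigma(j))$. *)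

(* Defs.v *)
From HB Require Import structures.
From mathcomp Require Import all_boot all_order all_algebra.
Set Implicit Arguments. Unset Strict Implicit. Unset Printing Implicit Defensive.
Import Order.TTheory GRing.Theory Num.Theory.
Local Open Scope ring_scope.

Definition is_metric (R : realFieldType) (P : Type) (d : P -> P -> R) : Prop :=
  [/\ (forall x y, 0 <= d x y),
      (forall x y, d x y = 0 <-> x = y),
      (forall x y, d x y = d y x) &
      (forall x y z, d x z <= d x y + d y z)].

Definition lbub_feasible (C F : finType) (L U : nat)
    (S : {set F}) (sigma : C -> F) : Prop :=
  (forall j, sigma j \in S) /\
  (forall i, i \in S -> (L <= #|[set j | sigma j == i]| <= U)%N).

Definition fl_cost (R : realFieldType) (C F : finType) (f : F -> R)
    (dist : C -> F -> R) (S : {set F}) (sigma : C -> F) : R :=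
  \sum_(i in S) f i + \sum_j dist j (sigma j).

(* Instance I_1: relocated clients, opening costs 0 on Ft. *)
Definition I1_open (R : realFieldType) (F : finType) (f : F -> R)
    (Ft : {set F}) (i : F) : R := if i \in Ft then 0 else f i.

Definition I1_dist (R : realFieldType) (C F : finType)
    (c : (C + F) -> (C + F) -> R) (sigmat : C -> F) (j : C) (i : F) : R :=
  c (inr (sigmat j)) (inr i).

Definition I1_feasible := lbub_feasible.

Definition I1_cost (R : realFieldType) (C F : finType) (c : (C + F) -> (C + F) -> R)
    (f : F -> R) (Ft : {set F}) (sigmat : C -> F) (S : {set F}) (sigma : C -> F) : R :=
  fl_cost (I1_open f Ft) (I1_dist c sigmat) S sigma.

Definition I1_optimal (R : realFieldType) (C F : finType) (c : (C + F) -> (C + F) -> R)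
    (f : F -> R) (L U : nat) (Ft : {set F}) (sigmat : C -> F)
    (S : {set F}) (sigma : C -> F) : Prop :=
  I1_feasible L U S sigma /\
  forall S' sigma', I1_feasible L U S' sigma' ->
    I1_cost c f Ft sigmat S sigma <= I1_cost c f Ft sigmat S' sigma'.

(* Instance I_2: lower-bounded facility location with facility set Ft,
   zero opening costs, relocated clients, lower bound L. *)
Definition I2_feasible (C F : finType) (L : nat) (Ft : {set F})
    (S : {set F}) (sigma : C -> F) : Prop :=
  S \subset Ft /\
  (forall j, sigma j \in S) /\
  (forall i, i \in S -> (L <= #|[set j | sigma j == i]|)%N).

Definition I2_cost (R : realFieldType) (C F : finType) (c : (C + F) -> (C + F) -> R)
    (sigmat : C -> F) (sigma : C -> F) : R :=
  \sum_j c (inr (sigmat j)) (inr (sigma j)).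

(* Main.v *)
Require Import Defs.
From HB Require Import structures.
From mathcomp Require Import all_boot all_order all_algebra.
Import Order.TTheory GRing.Theory Num.Theory.
Local Open Scope ring_scope.
Set Implicit Arguments.

Lemma exmin (R : realFieldType) (T : finType) (P : pred T) (M : T -> R) (t0 : T) :
  P t0 -> exists t, P t /\ forall u, P u -> M t <= M u.
Proof.
move=> Pt0.
by case: (arg_minP M Pt0) => t Pt H; exists t; split=> // u Pu; apply: H.
Qed.

Definition feasb (C F : finType) (L : nat) (Ft : {set F})
    (S : {set F}) (g : {ffun C -> F}) : bool :=
  [&& S \subset Ft, [forall j, g j \in S] &
      [forall i, (i \in S) ==> (L <= #|[set j | g j == i]|)%N]].

Lemma feasb_of (C F : finType) (L : nat) (Ft : {set F}) S (sigma : C -> F) :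
  I2_feasible L Ft S sigma -> feasb L Ft S [ffun j => sigma j].
Proof.
case=> [sub [h1 h2]]; apply/and3P; split=> //.
  by apply/forallP=> j; rewrite ffunE.
apply/forallP=> i; apply/implyP=> iS.
have -> : [set j | [ffun j => sigma j] j == i] = [set j | sigma j == i].
  by apply/setP=> j; rewrite !inE ffunE.
by apply: h2.
Qed.

Lemma of_feasb (C F : finType) (L : nat) (Ft : {set F}) S (g : {ffun C -> F}) :
  feasb L Ft S g -> I2_feasible L Ft S (fun j => g j).
Proof.
case/and3P=> sub /forallP h1 /forallP h2; split=> //; split=> // i iS.
by move: (h2 i); rewrite iS.
Qed.

Unset Implicit Arguments.

Theorem lemma3p2 (R : realFieldType) (C F : finType)
    (c : (C + F) -> (C + F) -> R) (f : F -> R) (L U : nat)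
    (Ft : {set F}) (sigmat : C -> F) (S1 : {set F}) (sigma1 : C -> F) :
  is_metric c ->
  (forall i, 0 <= f i) ->
  (1 <= L)%N -> (L <= U)%N ->
  Ft != set0 ->
  (forall j, sigmat j \in Ft) ->
  I1_optimal c f L U Ft sigmat S1 sigma1 ->
  exists (S2 : {set F}) (sigma2 : C -> F),
    [/\ I2_feasible L Ft S2 sigma2,
        (forall S' sigma', I2_feasible L Ft S' sigma' ->
           I2_cost c sigmat sigma2 <= I2_cost c sigmat sigma') &
        I2_cost c sigmat sigma2 <= 2 * I1_cost c f Ft sigmat S1 sigma1].
Proof.
move=> [c0 cid csym ctri] f0 L1 LU _ sFt [[feas1 feas2] _].
pose M (i : F) (k : C) := c (inr (sigmat k)) (inr i).
pose kstar (i : F) (d : C) :=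
  Order.arg_min (odflt d [pick k | sigma1 k == i]) (fun k => sigma1 k == i) (M i).
have kstarP : forall j, sigma1 (kstar (sigma1 j) j) = sigma1 j /\
    forall k, sigma1 k = sigma1 j -> M (sigma1 j) (kstar (sigma1 j) j) <= M (sigma1 j) k.
  move=> j.
  have Pw : sigma1 (odflt j [pick k | sigma1 k == sigma1 j]) == sigma1 j.
    by case: pickP => [k /= -> //|/(_ j)]; rewrite eqxx.
  rewrite /kstar.
  case: (@arg_minP _ _ C _ (fun k => sigma1 k == sigma1 j) (M (sigma1 j)) Pw) => k /eqP Hk Hmin; split=> // k' Hk'.
  by apply: Hmin; apply/eqP.
have kstar_eq : forall j j', sigma1 j = sigma1 j' ->
    kstar (sigma1 j) j = kstar (sigma1 j) j'.
  move=> j j' e; rewrite /kstar; case: pickP => [k _ //|/(_ j)].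
  by rewrite eqxx.
pose sigma2 j := sigmat (kstar (sigma1 j) j).
pose S2 := [set sigma2 j | j in C].
have feasS2 : I2_feasible L Ft S2 sigma2.
  split; [|split].
  - by apply/subsetP=> i /imsetP [j _ ->]; apply: sFt.
  - by move=> j; apply/imsetP; exists j.
  move=> i /imsetP [j0 _ ->].
  case/andP: (feas2 _ (feas1 j0)) => HL _.
  apply: (leq_trans HL); apply: subset_leq_card.
  apply/subsetP=> j; rewrite !inE => /eqP e.
  rewrite /sigma2 (kstar_eq j j0 e) e.
  by apply/eqP.
have bound : I2_cost c sigmat sigma2 <= 2 * I1_cost c f Ft sigmat S1 sigma1.
  rewrite /I1_cost /fl_cost /I2_cost mulrDr.
  apply: ler_wpDl.
    by rewrite mulr_ge0 // sumr_ge0 // => i _; rewrite /I1_open; case: ifP.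
  rewrite mulr_sumr; apply: ler_sum => j _.
  case: (kstarP j) => _ Hm.
  apply: (le_trans (ctri _ (inr (sigma1 j)) _)).
  rewrite /I1_dist mulr_natl mulr2n lerD2l (csym (inr (sigma1 j))).
  exact: Hm.
pose P (p : ({set F} * {ffun C -> F})%type) := feasb L Ft p.1 p.2.
have P0 : P (S2, [ffun j => sigma2 j]) by apply: feasb_of.
have [[So go] [Po Hmin]] := @exmin R _ P (fun p => I2_cost c sigmat (fun j => p.2 j)) _ P0.
exists So, (fun j => go j); split.
- exact: of_feasb.
- move=> S' sigma' H'.
  have := Hmin (S', [ffun j => sigma' j]) (feasb_of H').
  by rewrite /I2_cost /=; under [X in _ <= X -> _]eq_bigr do rewrite ffunE.
- apply: le_trans bound.
  have := Hmin _ P0.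
  by rewrite /I2_cost /=; under [X in _ <= X -> _]eq_bigr do rewrite ffunE.
Qed.
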